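(* Let $\Psi$ be a root system in a real inner product space, with base $\{\gamma_1,\dots,\gamma_m\}$ and positive roots $\Psi^+$, and let $\mathfrak{s}^+=\{H\in\operatorname{span}\Psi:(H,\gamma_i)>0 \text{ for all } i=1,\dots,m\}$. Let $\Psi_1=\operatorname{span}_{\mathbb{Z}}\{\gamma_2,\dots,\gamma_m\}\cap\Psi$, with Weyl group $\mathcal{V}_1$ (generated by the reflections $\sigma_\alpha(v)=v-\frac{2(v,\alpha)}{(\alpha,\alpha)}\alpha$, $\alpha\in\Psi_1$), and let $\mathfrak{c}^+=\{H\in\operatorname{span}\Psi_1:(H,\gamma_i)>0\text{ for } i=2,\dots,m\}$. Let $$R_1=\{H\in\mathfrak{s}^+:\|H\|\ge1,\ (\gamma_1,H)\ge(\gamma_j,H)\text{ for all } j\},$$ and define $P:\operatorname{span}\Psi\to\operatorname{span}\Psi$ by $P(H)=\frac{1}{|\mathcal{V}_1|}\sum_{\sigma\in\mathcal{V}_1}\sigma(H)$. Then: (i) $\sigma(P(H))=P(H)$ for all $\sigma\in\mathcal{V}_1$ and $H\in\operatorname{span}\Psi$; (ii) $P$ is the orthogonal projection from $\operatorname{span}\Psi$ onto $(\operatorname{span}\Psi_1)^\perp$, so $I-P$ is the orthogonal projection from $\operatorname{span}\Psi$ onto $\operatorname{span}\Psi_1$; (iii) $I-P$ maps $\mathfrak{s}^+$ into $\mathfrak{c}^+$; (iv) there are constants $a,b>0$ such that $\|P(H)\|\ge a\|H\|$ and $\|(I-P)H\|\le b\|P(H)\|$ for all $H\in R_1$.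
   Context: In the paper $\Psi$ arises as a simple subroot system of an irreducible root system $\Phi$ with base $\Delta$, i.e. $\Psi=\operatorname{span}_{\mathbb{Z}}\{\gamma_1,\dots,\gamma_m\}\cap\Phi$ for some subset $\{\gamma_1,\dots,\gamma_m\}\subseteq\Delta$, which is then a base of $\Psi$. *)

(* Defs.v *)
From HB Require Import structures.
From mathcomp Require Import all_boot all_order all_algebra.
From mathcomp Require Import boolp reals.
From Stdlib Require Import ClassicalEpsilon.
Set Implicit Arguments. Unset Strict Implicit. Unset Printing Implicit Defensive.
Import Order.TTheory GRing.Theory Num.Theory.
Local Open Scope ring_scope.

Section RootDefs.
Variables (R : realType) (d : nat).
Local Notation V := 'rV[R]_d.

Definition dotp (u v : V) : R := (u *m v^T) 0 0.
Definition vnorm (u : V) : R := Num.sqrt (dotp u u).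

(** The reflection sigma_a (v) = v - 2 (v,a)/(a,a) a, as a map and as the
    matrix acting on row vectors on the right. *)
Definition refl (a v : V) : V := v - (2 * dotp v a / dotp a a) *: a.
Definition reflmx (a : V) : 'M[R]_d :=
  1%:M - (2 / dotp a a) *: (a^T *m a).

(** A (finite, reduced, crystallographic) root system, given by the finite
    list of its roots. *)
Definition root_system (Psi : seq V) : Prop :=
  [/\ uniq Psi, (0 : V) \notin Psi,
      (forall a b, a \in Psi -> b \in Psi -> refl a b \in Psi),
      (forall a b, a \in Psi -> b \in Psi ->
          exists z : int, 2 * dotp b a / dotp a a = z%:~R)
    & (forall a (c : R), a \in Psi -> c *: a \in Psi -> c = 1 \/ c = -1)].

Definition base_of (Psi : seq V) (k : nat) (gam : 'I_k -> V) : Prop :=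
  [/\ (forall i, gam i \in Psi),
      (forall c : 'I_k -> R, \sum_i c i *: gam i = 0 -> forall i, c i = 0)
    & (forall b, b \in Psi -> exists c : 'I_k -> int,
          b = \sum_i (c i)%:~R *: gam i /\
          ((forall i, (0 <= c i)%R) \/ (forall i, (c i <= 0)%R)))].

(** Psi_1 = span_Z {gam_2, ..., gam_m} \cap Psi (gam_1 is gam ord0). *)
Definition subroots (Psi : seq V) (m : nat) (gam : 'I_m.+1 -> V) : seq V :=
  [seq b <- Psi | `[< exists c : 'I_m.+1 -> int,
        c ord0 = 0 /\ b = \sum_i (c i)%:~R *: gam i >]].

Definition in_weyl (S : seq V) (M : 'M[R]_d) : Prop :=
  exists l : seq V, all (mem S) l /\ M = foldr (fun a N => reflmx a *m N) 1%:M l.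

(** A duplicate-free enumeration of the Weyl group (chosen classically;
    the Weyl group is finite, so such an enumeration exists). *)
Definition weyl_enum (S : seq V) : seq 'M[R]_d :=
  epsilon (inhabits [::])
    (fun s => uniq s /\ forall M, M \in s <-> in_weyl S M).

Definition avgP (S : seq V) (H : V) : V :=
  (size (weyl_enum S))%:R^-1 *: \sum_(M <- weyl_enum S) (H *m M).

Definition orth_proj (D W : V -> Prop) (f : V -> V) : Prop :=
  forall H, D H -> W (f H) /\ forall w, W w -> dotp (H - f H) w = 0.

End RootDefs.

(* Main.v *)
Require Import Defs.
From HB Require Import structures.
From mathcomp Require Import all_boot all_order all_algebra.
From mathcomp Require Import boolp reals.
From Stdlib Require Import ClassicalEpsilon.
From mathcomp Require Import ring lra zify.
Set Implicit Arguments. Unset Strict Implicit. Unset Printing Implicit Defensive.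
Import Order.TTheory GRing.Theory Num.Theory.
Local Open Scope ring_scope.

Section Basics.
Variables (R : realType) (d : nat).
Local Notation V := 'rV[R]_d.
Implicit Types u v w x y a : V.

Lemma dotpE u v : dotp u v = \sum_i u 0 i * v 0 i.
Proof. by rewrite /dotp !mxE; apply: eq_bigr => i _; rewrite mxE. Qed.

Lemma dotpC u v : dotp u v = dotp v u.
Proof. by rewrite !dotpE; apply: eq_bigr => i _; rewrite mulrC. Qed.

Lemma dotpDl u v w : dotp (u + v) w = dotp u w + dotp v w.
Proof. by rewrite !dotpE -big_split; apply: eq_bigr => i _; rewrite !mxE mulrDl. Qed.

Lemma dotpZl (c : R) u w : dotp (c *: u) w = c * dotp u w.
Proof. by rewrite !dotpE mulr_sumr; apply: eq_bigr => i _; rewrite !mxE mulrA. Qed.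

Lemma dotpNl u w : dotp (- u) w = - dotp u w.
Proof. by rewrite -scaleN1r dotpZl mulN1r. Qed.

Lemma dotpBl u v w : dotp (u - v) w = dotp u w - dotp v w.
Proof. by rewrite dotpDl dotpNl. Qed.

Lemma dotp0l w : dotp 0 w = 0.
Proof. by rewrite -(scale0r 0) dotpZl mul0r. Qed.

Lemma dotp_suml (I : Type) (r : seq I) (P : pred I) (F : I -> V) w :
  dotp (\sum_(i <- r | P i) F i) w = \sum_(i <- r | P i) dotp (F i) w.
Proof.
elim/big_rec2: _ => [|i y1 y2 _ <-]; first by rewrite dotp0l.
by rewrite dotpDl.
Qed.

Lemma dotpDr u v w : dotp w (u + v) = dotp w u + dotp w v.
Proof. by rewrite dotpC dotpDl !(dotpC w). Qed.
Lemma dotpZr (c : R) u w : dotp w (c *: u) = c * dotp w u.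
Proof. by rewrite dotpC dotpZl dotpC. Qed.
Lemma dotpNr u w : dotp w (- u) = - dotp w u.
Proof. by rewrite dotpC dotpNl dotpC. Qed.
Lemma dotpBr u v w : dotp w (u - v) = dotp w u - dotp w v.
Proof. by rewrite dotpDr dotpNr. Qed.
Lemma dotp0r w : dotp w 0 = 0.
Proof. by rewrite dotpC dotp0l. Qed.
Lemma dotp_sumr (I : Type) (r : seq I) (P : pred I) (F : I -> V) w :
  dotp w (\sum_(i <- r | P i) F i) = \sum_(i <- r | P i) dotp w (F i).
Proof. by rewrite dotpC dotp_suml; apply: eq_bigr => i _; rewrite dotpC. Qed.

Lemma dotpp_ge0 u : 0 <= dotp u u.
Proof. by rewrite dotpE; apply: sumr_ge0 => i _; rewrite -expr2 sqr_ge0. Qed.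

Lemma dotpp_eq0 u : dotp u u = 0 -> u = 0.
Proof.
rewrite dotpE => H; apply/rowP => i; rewrite mxE.
have ge : forall j : 'I_d, predT j -> 0 <= u 0 j * u 0 j.
  by move=> j _; rewrite -expr2 sqr_ge0.
have := @psumr_eq0P _ _ predT (fun i => u 0 i * u 0 i) ge H i isT.
by move/eqP; rewrite mulf_eq0 orbb => /eqP.
Qed.

Lemma dotpp_gt0 u : u != 0 -> 0 < dotp u u.
Proof.
move=> nz; rewrite lt_def dotpp_ge0 andbT; apply/eqP => /dotpp_eq0 E.
by rewrite E eqxx in nz.
Qed.

Lemma span_orth (X : seq V) v u :
  (forall a, a \in X -> dotp v a = 0) -> u \in <<X>>%VS -> dotp v u = 0.
Proof.
move=> H Hu; rewrite (@coord_span _ _ _ (in_tuple X) u Hu) dotp_sumr.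
by apply: big1 => i _; rewrite dotpZr H ?mulr0 // mem_nth.
Qed.

Lemma CS u w : dotp u w ^+ 2 <= dotp u u * dotp w w.
Proof.
have [->|nz] := eqVneq w 0; first by rewrite !dotp0r expr0n mulr0.
have wp := dotpp_gt0 nz.
set t := dotp u w / dotp w w.
have := dotpp_ge0 (u - t *: w).
rewrite !dotpBl !dotpBr !dotpZl !dotpZr (dotpC w u).
rewrite /t => H.
have : 0 <= dotp w w * (dotp u u - dotp u w / dotp w w * dotp u w -
     (dotp u w / dotp w w * dotp u w -
      dotp u w / dotp w w * (dotp u w / dotp w w * dotp w w))).
  by rewrite mulr_ge0 // ltW.
have -> : dotp w w * (dotp u u - dotp u w / dotp w w * dotp u w -
     (dotp u w / dotp w w * dotp u w -
      dotp u w / dotp w w * (dotp u w / dotp w w * dotp w w))) =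
     dotp u u * dotp w w - dotp u w ^+ 2.
  by field; rewrite gt_eqF.
by rewrite subr_ge0.
Qed.

Lemma mx11_mul (B : 'M[R]_1) a : B *m a = B 0 0 *: a.
Proof. by apply/rowP => j; rewrite !mxE big_ord1. Qed.

Lemma reflmxE a x : x *m reflmx a = refl a x.
Proof.
rewrite /reflmx /refl mulmxBr mulmx1 -scalemxAr mulmxA mx11_mul.
by rewrite scalerA /dotp mulrAC.
Qed.

Lemma mx_ext (m : nat) (A B : 'M[R]_(d, m)) :
  (forall x : V, x *m A = x *m B) -> A = B.
Proof. by move=> H; apply/row_matrixP => i; rewrite !rowE H. Qed.

Lemma refl_dot a x : dotp (refl a x) a = dotp x a - 2 * dotp x a / dotp a a * dotp a a.
Proof. by rewrite /refl dotpBl dotpZl. Qed.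

Lemma reflK a x : a != 0 -> refl a (refl a x) = x.
Proof.
move=> nz; have ap := dotpp_gt0 nz.
rewrite {1}/refl refl_dot.
have -> : 2 * (dotp x a - 2 * dotp x a / dotp a a * dotp a a) / dotp a a =
   - (2 * dotp x a / dotp a a) by field; rewrite gt_eqF.
by rewrite /refl scaleNr opprK subrK.
Qed.

Lemma refl_dotp a x y : a != 0 -> dotp (refl a x) (refl a y) = dotp x y.
Proof.
move=> nz; have ap := dotpp_gt0 nz.
rewrite /refl !dotpBl !dotpBr !dotpZl !dotpZr (dotpC a y).
by field; rewrite gt_eqF.
Qed.

Lemma refl_fix a x : dotp x a = 0 -> refl a x = x.
Proof. by move=> H; rewrite /refl H mulr0 mul0r scale0r subr0. Qed.

Lemma reflmxK a : a != 0 -> reflmx a *m reflmx a = 1%:M.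
Proof. by move=> nz; apply: mx_ext => x; rewrite mulmxA !reflmxE reflK // mulmx1. Qed.

End Basics.

Section Weyl.
Variables (R : realType) (d : nat).
Local Notation V := 'rV[R]_d.
Implicit Types u v w x y a : V.

Definition wmx (l : seq V) : 'M[R]_d := foldr (fun a N => reflmx a *m N) 1%:M l.
Definition act (l : seq V) x := foldl (fun x a => refl a x) x l.

Lemma wmx_act l x : x *m wmx l = act l x.
Proof.
elim: l x => [|a l IH] x /=; first by rewrite mulmx1.
by rewrite mulmxA reflmxE IH.
Qed.

Lemma wmx_cat l1 l2 : wmx (l1 ++ l2) = wmx l1 *m wmx l2.
Proof.
elim: l1 => [|a l IH] /=; first by rewrite mul1mx.
by rewrite IH mulmxA.
Qed.

Variable S : seq V.
Hypothesis HS0 : forall a, a \in S -> a != 0.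
Hypothesis HScl : forall a b, a \in S -> b \in S -> refl a b \in S.

Lemma wmx_inv l : all (mem S) l -> wmx l *m wmx (rev l) = 1%:M.
Proof.
elim: l => [|a l IH] /=; first by rewrite mulmx1.
move=> /andP [aS lS].
rewrite rev_cons -cats1 wmx_cat /= mulmx1 -!mulmxA (mulmxA (wmx l)) IH //.
by rewrite mul1mx reflmxK // HS0.
Qed.

Lemma act_fix l x : all (mem S) l -> (forall a, a \in S -> dotp x a = 0) -> act l x = x.
Proof.
elim: l x => [|a l IH] x //= /andP [aS lS] H.
by rewrite refl_fix ?H // IH.
Qed.

Lemma act_span l x : all (mem S) l -> act l x - x \in <<S>>%VS.
Proof.
elim: l x => [|a l IH] x /=; first by rewrite subrr mem0v.
move=> /andP [aS lS].
have -> : act l (refl a x) - x = (act l (refl a x) - refl a x) + (refl a x - x).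
  by rewrite addrA subrK.
rewrite memvD ?IH //.
by rewrite /refl addrAC subrr add0r memvN memvZ // memv_span.
Qed.

Lemma act_dotp l x y : all (mem S) l -> dotp (act l x) (act l y) = dotp x y.
Proof.
elim: l x y => [|a l IH] x y //= /andP [aS lS].
by rewrite IH // refl_dotp // HS0.
Qed.

Lemma act_mem l b : all (mem S) l -> b \in S -> act l b \in S.
Proof.
elim: l b => [|a l IH] b //= /andP [aS lS] bS.
by rewrite IH // HScl.
Qed.

Lemma in_weyl_wmx M : in_weyl S M -> exists2 l, all (mem S) l & M = wmx l.
Proof. by case=> l [H1 H2]; exists l. Qed.

Lemma weyl_inj M N : in_weyl S M -> in_weyl S N ->
  (forall a, a \in S -> a *m M = a *m N) -> M = N.
Proof.
move=> /in_weyl_wmx [l lS ->] /in_weyl_wmx [l' l'S ->] H.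
apply: mx_ext => x.
set w := x *m wmx l - x *m wmx l'.
have wS : w \in <<S>>%VS.
  have -> : w = (x *m wmx l - x) - (x *m wmx l' - x) by rewrite /w opprB addrA subrK.
  by rewrite memvB // wmx_act act_span.
have orth : forall b, b \in S -> dotp w b = 0.
  move=> b bS.
  have rS : all (mem S) (rev l') by rewrite all_rev.
  set a := b *m wmx (rev l').
  have aS : a \in S by rewrite /a wmx_act act_mem.
  have ab : a *m wmx l' = b.
    by rewrite /a -mulmxA -{2}(revK l') wmx_inv ?mulmx1.
  rewrite -ab /w dotpBl -{1}(H a aS) !wmx_act !act_dotp //.
  by rewrite subrr.
apply/eqP; rewrite -subr_eq0; apply/eqP; apply: dotpp_eq0.
exact: span_orth orth wS.
Qed.

Lemma weyl_finite : exists s : seq 'M[R]_d, uniq s /\ forall M, M \in s <-> in_weyl S M.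
Proof.
pose n := size S.
pose spec (f : {ffun 'I_n -> 'I_n}) (M : 'M[R]_d) :=
  in_weyl S M /\ forall i : 'I_n, S`_i *m M = S`_(f i).
pose pick f := epsilon (inhabits 1%:M) (spec f).
pose L := [seq pick f | f <- enum {: {ffun 'I_n -> 'I_n}}].
exists (undup [seq M <- L | `[< in_weyl S M >]]); split; first exact: undup_uniq.
move=> M; rewrite mem_undup mem_filter; split.
  by case/andP => /asboolP.
move=> HM; apply/andP; split; first exact/asboolP.
have [l lS EM] := in_weyl_wmx HM.
have memS : forall i : 'I_n, (index (S`_i *m M) S < n)%N.
  by move=> i; rewrite index_mem EM wmx_act act_mem // mem_nth.
pose f := [ffun i => Ordinal (memS i)].
have sf : spec f M.
  split => // i; rewrite ffunE /= nth_index // -index_mem; exact: memS.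
have := epsilon_spec (inhabits 1%:M) (spec f) (ex_intro _ M sf).
rewrite -/(pick f) => -[Hp Hpf].
have -> : M = pick f.
  apply: weyl_inj => // a aS.
  have ai : (index a S < n)%N by rewrite index_mem.
  have := Hpf (Ordinal ai); rewrite /= nth_index // => ->.
  by case: sf => _ /(_ (Ordinal ai)); rewrite /= nth_index.
by apply: map_f; rewrite mem_enum.
Qed.

End Weyl.

Section Avg.
Variables (R : realType) (d : nat).
Local Notation V := 'rV[R]_d.
Implicit Types u v w x y a H : V.
Variable S : seq V.
Hypothesis HS0 : forall a, a \in S -> a != 0.
Hypothesis HScl : forall a b, a \in S -> b \in S -> refl a b \in S.

Lemma weyl_enumP : uniq (weyl_enum S) /\ forall M, M \in weyl_enum S <-> in_weyl S M.
Proof. exact: epsilon_spec (weyl_finite HS0 HScl). Qed.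

Lemma weyl1 : in_weyl S 1%:M.
Proof. by exists [::]. Qed.

Lemma weyl_mulr M a : in_weyl S M -> a \in S -> in_weyl S (M *m reflmx a).
Proof.
move=> /in_weyl_wmx [l lS ->] aS; exists (l ++ [:: a]); split.
  by rewrite all_cat lS /= aS.
by rewrite -/(wmx (l ++ [:: a])) wmx_cat /= mulmx1.
Qed.

Lemma size_weyl : (0 < size (weyl_enum S))%N.
Proof.
case: weyl_enumP => _ /(_ 1%:M) [_ /(_ weyl1)].
by case: (weyl_enum S).
Qed.

Lemma sum_const_seq (T : Type) (s : seq T) x : \sum_(M <- s) x = x *+ size s.
Proof. by elim: s => [|a s IH]; rewrite ?big_nil ?big_cons ?IH ?mulrS. Qed.

Lemma avgP_span H : H - avgP S H \in <<S>>%VS.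
Proof.
set s := weyl_enum S; set N := size s.
have Nz : (N%:R : R) != 0 by rewrite pnatr_eq0 -lt0n size_weyl.
have E : H = N%:R^-1 *: \sum_(M <- s) H.
  by rewrite sum_const_seq -scaler_nat scalerA mulVf // scale1r.
rewrite {1}E /avgP -/s -scalerBr -sumrB big_seq memvZ // memv_suml // => M Ms.
have [_ /(_ M) [/(_ Ms) HM _]] := weyl_enumP.
have [l lS ->] := in_weyl_wmx HM.
rewrite -opprB memvN wmx_act; exact: act_span.
Qed.

Lemma avgP_refl H a : a \in S -> avgP S H *m reflmx a = avgP S H.
Proof.
move=> aS; rewrite /avgP -scalemxAl mulmx_suml; congr (_ *: _).
set r := reflmx a.
have rr : r *m r = 1%:M by rewrite reflmxK // HS0.
pose f := fun M : 'M[R]_d => M *m r.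
have can : cancel f f by move=> M; rewrite /f -mulmxA rr mulmx1.
have [us mems] := weyl_enumP.
transitivity (\sum_(M <- [seq f M | M <- weyl_enum S]) H *m M).
  by rewrite big_map; apply: eq_bigr => M _; rewrite mulmxA.
apply: perm_big; apply: uniq_perm.
- by rewrite map_inj_uniq //; exact: can_inj can.
- exact: us.
move=> M; rewrite -{1}(can M) mem_map; last exact: can_inj can.
apply/idP/idP => /mems HM; apply/mems.
  by rewrite -(can M); apply: weyl_mulr.
exact: weyl_mulr.
Qed.

Lemma avgP_orth H a : a \in S -> dotp (avgP S H) a = 0.
Proof.
move=> aS; have ap := dotpp_gt0 (HS0 aS).
have := avgP_refl H aS; rewrite reflmxE /refl => /eqP.
rewrite subr_eq addrC -subr_eq subrr eq_sym scaler_eq0 (negbTE (HS0 aS)) orbF.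
by rewrite !mulf_eq0 invr_eq0 (gt_eqF ap) orbF pnatr_eq0 /= => /eqP.
Qed.

Lemma avgP_perp H u : u \in <<S>>%VS -> dotp (avgP S H) u = 0.
Proof. by apply: span_orth => a; apply: avgP_orth. Qed.

Lemma avgP_weyl H M : in_weyl S M -> avgP S H *m M = avgP S H.
Proof.
move=> /in_weyl_wmx [l lS ->]; rewrite wmx_act (act_fix lS) //.
by move=> a; apply: avgP_orth.
Qed.

End Avg.

Section Roots.
Variables (R : realType) (d m : nat).
Local Notation V := 'rV[R]_d.
Implicit Types u v w x y a b H : V.
Variables (Psi : seq V) (gam : 'I_m.+1 -> V).
Hypothesis HPsi : root_system Psi.
Hypothesis Hbase : base_of Psi gam.

Definition ee (i k : 'I_m.+1) : R := (k == i)%:R.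

Lemma gam_in i : gam i \in Psi.
Proof. by case: Hbase. Qed.

Lemma Psi_nz a : a \in Psi -> a != 0.
Proof. by case: HPsi => _ H0 _ _ _ aS; apply/eqP => E; rewrite -E aS in H0. Qed.

Lemma gam_sum i : gam i = \sum_k ee i k *: gam k.
Proof.
rewrite (bigD1 i) //= /ee eqxx scale1r big1 ?addr0 // => k /negbTE ->.
by rewrite scale0r.
Qed.

Lemma coef_uniq (c1 c2 : 'I_m.+1 -> R) :
  \sum_i c1 i *: gam i = \sum_i c2 i *: gam i -> forall i, c1 i = c2 i.
Proof.
move=> E i; case: Hbase => _ Hind _.
apply/eqP; rewrite -subr_eq0; apply/eqP; apply: (Hind (fun k => c1 k - c2 k)).
by rewrite (eq_bigr (fun k => c1 k *: gam k - c2 k *: gam k)) ?sumrB ?E ?subrr //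
  => k _; rewrite scalerBl.
Qed.

Lemma not_diff i j : i != j -> gam i - gam j \notin Psi.
Proof.
move=> ij; apply/negP; case: Hbase => _ _ Hb /Hb [c [E sg]].
have Ec : forall k, (c k)%:~R = ee i k - ee j k.
  apply: coef_uniq; rewrite -E (gam_sum i) (gam_sum j) -sumrB.
  by apply: eq_bigr => k _; rewrite scalerBl.
have ci := Ec i; have cj := Ec j.
rewrite /ee eqxx (negbTE ij) in ci; rewrite /ee eqxx eq_sym (negbTE ij) in cj.
case: sg => H.
  by have := H j; rewrite -(ler0z R) cj sub0r oppr_ge0 ler10.
by have := H i; rewrite -(ler_int R) ci subr0 ler10.
Qed.

Lemma gam_obtuse i j : i != j -> dotp (gam i) (gam j) <= 0.
Proof.
move=> ij; rewrite leNgt; apply/negP => Xp.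
case: HPsi => _ _ Hrefl Hint Hsc.
have aS := gam_in i; have bS := gam_in j.
have Ap := dotpp_gt0 (Psi_nz aS); have Bp := dotpp_gt0 (Psi_nz bS).
have [z1 E1] := Hint _ _ bS aS.
have [z2 E2] := Hint _ _ aS bS.
rewrite (dotpC (gam j)) in E2.
set A := dotp (gam i) (gam i) in Ap E2; set B := dotp (gam j) (gam j) in Bp E1.
set X := dotp (gam i) (gam j) in Xp E1 E2.
have z1p : (0 < z1)%R by rewrite -(ltr0z R) -E1 divr_gt0 ?mulr_gt0.
have z2p : (0 < z2)%R by rewrite -(ltr0z R) -E2 divr_gt0 ?mulr_gt0.
have key : (z1 * z2 < 4)%R.
  rewrite ltNge; apply/negP => H4.
  have : ((4:int)%:~R <= (z1*z2)%:~R :> R) by rewrite ler_int.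
  rewrite intrM -E1 -E2 => H.
  have HX : A * B <= X ^+ 2.
    have -> : X ^+ 2 = (2 * X / B * (2 * X / A)) * (A * B) / 4.
      by field; rewrite !gt_eqF.
    by rewrite ler_pdivlMr // [_ * 4]mulrC ler_pM2r ?mulr_gt0.
  have CSi := CS (gam i) (gam j); rewrite -/A -/B -/X in CSi.
  set w := B *: gam i - X *: gam j.
  have ww : dotp w w = B * (A * B - X ^+ 2).
    rewrite /w !dotpBl !dotpBr !dotpZl !dotpZr (dotpC (gam j) (gam i)) -/A -/B -/X.
    by ring.
  have w0 : w = 0.
    apply: dotpp_eq0; rewrite ww; apply/eqP; rewrite mulf_eq0 subr_eq0.
    by apply/orP; right; rewrite eq_le HX CSi.
  have Ea : gam i = (X / B) *: gam j.
    move/eqP: w0; rewrite subr_eq0 => /eqP E.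
    by rewrite mulrC -scalerA -E scalerA mulVf ?scale1r // gt_eqF.
  have := Hsc (gam j) (X / B) bS; rewrite -Ea => /(_ aS) [] c1.
    have E : \sum_k ee i k *: gam k = \sum_k ee j k *: gam k.
      by rewrite -!gam_sum Ea c1 scale1r.
    have := coef_uniq E i.
    by rewrite /ee eqxx (negbTE ij) => /eqP; rewrite oner_eq0.
  case: Hbase => _ Hind _.
  have S0 : \sum_k (ee i k + ee j k) *: gam k = 0.
    rewrite (eq_bigr (fun k => ee i k *: gam k + ee j k *: gam k)) ?big_split /=;
      last by move=> k _; rewrite scalerDl.
    by rewrite -gam_sum -gam_sum Ea c1 scaleN1r addrC subrr.
  have := Hind _ S0 i.
  by rewrite /ee eqxx (negbTE ij) addr0 => /eqP; rewrite oner_eq0.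
have : (z1 = 1 \/ z2 = 1)%R by lia.
case=> zE.
  have := Hrefl _ _ bS aS; rewrite /refl E1 zE scale1r.
  by rewrite (negbTE (not_diff ij)).
have := Hrefl _ _ aS bS; rewrite /refl (dotpC (gam j)) E2 zE scale1r.
by rewrite eq_sym in ij; rewrite (negbTE (not_diff ij)).
Qed.

Lemma orth_all v : v \in <<Psi>>%VS -> (forall i, dotp v (gam i) = 0) -> v = 0.
Proof.
move=> vS H; apply: dotpp_eq0; apply: span_orth vS => b bS.
case: Hbase => _ _ /(_ b bS) [c [-> _]].
by rewrite dotp_sumr big1 // => i _; rewrite dotpZr H mulr0.
Qed.

Local Notation Psi1 := (subroots Psi gam).

Lemma mem_Psi1 b : b \in Psi1 ->
  b \in Psi /\ exists c : 'I_m.+1 -> int, c ord0 = 0 /\ b = \sum_i (c i)%:~R *: gam i.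
Proof. by rewrite mem_filter => /andP [/asboolP H bS]. Qed.

Lemma Psi1_sub : {subset Psi1 <= Psi}.
Proof. by move=> b /mem_Psi1 []. Qed.

Lemma Psi1_nz a : a \in Psi1 -> a != 0.
Proof. by move/Psi1_sub; exact: Psi_nz. Qed.

Lemma Psi1_refl a b : a \in Psi1 -> b \in Psi1 -> refl a b \in Psi1.
Proof.
move=> /mem_Psi1 [aS [ca [ca0 Ea]]] /mem_Psi1 [bS [cb [cb0 Eb]]].
case: HPsi => _ _ Hrefl Hint _.
rewrite mem_filter Hrefl // andbT; apply/asboolP.
have [z Ez] := Hint _ _ aS bS.
exists (fun k => cb k - z * ca k); split; first by rewrite ca0 cb0 mulr0 subrr.
rewrite /refl Ez {1}Eb Ea scaler_sumr -sumrB; apply: eq_bigr => k _.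
by rewrite intrB intrM scalerBl scalerA.
Qed.

Lemma gam_Psi1 i : i != ord0 -> gam i \in Psi1.
Proof.
move=> i0; rewrite mem_filter gam_in andbT; apply/asboolP.
exists (fun k => (k == i)%:Z); split; first by rewrite eq_sym (negbTE i0).
rewrite {1}(gam_sum i); apply: eq_bigr => k _.
by rewrite /ee; case: (k == i).
Qed.

End Roots.

Section Dual.
Variables (R : realType) (d m : nat).
Local Notation V := 'rV[R]_d.
Implicit Types u v w x y a b H : V.
Variables (Psi : seq V) (gam : 'I_m.+1 -> V).
Hypothesis HPsi : root_system Psi.
Hypothesis Hbase : base_of Psi gam.

Lemma sum_delta (F : 'I_m.+1 -> R) k : \sum_i F i * (i == k)%:R = F k.
Proof.
rewrite (bigD1 k) //= eqxx mulr1 big1 ?addr0 // => i /negbTE ->.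
by rewrite mulr0.
Qed.

Definition G : 'M[R]_m.+1 := \matrix_(i, j) dotp (gam i) (gam j).

Lemma G_inj (x : 'rV[R]_m.+1) : x *m G = 0 -> x = 0.
Proof.
move=> xG.
pose v := \sum_i x 0 i *: gam i.
have vg : forall j, dotp v (gam j) = 0.
  move=> j; have H1 : (x *m G) 0 j = 0 by rewrite xG mxE.
  rewrite -H1 mxE /v dotp_suml; apply: eq_bigr => i _.
  by rewrite dotpZl mxE.
have v0 : v = 0.
  apply: dotpp_eq0; rewrite {1}/v dotp_suml big1 // => i _.
  by rewrite dotpZl dotpC vg mulr0.
case: Hbase => _ Hind _.
by apply/rowP => i; rewrite mxE; exact: (Hind (fun i => x 0 i) v0 i).
Qed.

Lemma G_unit : G \in unitmx.
Proof.
rewrite -row_free_unit -kermx_eq0; apply/eqP/row_matrixP => k.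
rewrite row0; apply: G_inj.
by rewrite -row_mul mulmx_ker row0.
Qed.

Definition Ginv := invmx G.
Definition om i := \sum_j Ginv i j *: gam j.

Lemma om_gam i k : dotp (om i) (gam k) = (i == k)%:R.
Proof.
have H1 : (Ginv *m G) i k = (i == k)%:R by rewrite mulVmx ?G_unit // mxE.
rewrite -H1 mxE /om dotp_suml; apply: eq_bigr => j _.
by rewrite dotpZl mxE.
Qed.

Lemma om_span i : om i \in <<Psi>>%VS.
Proof.
rewrite /om memv_suml // => j _; rewrite memvZ // memv_span //.
exact: gam_in Hbase j.
Qed.

Lemma H_decomp H : H \in <<Psi>>%VS -> H = \sum_i dotp H (gam i) *: om i.
Proof.
move=> HS; apply/eqP; rewrite -subr_eq0; apply/eqP.
apply: (orth_all Hbase).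
  by rewrite memvB // memv_suml // => i _; rewrite memvZ // om_span.
move=> k; rewrite dotpBl dotp_suml.
rewrite (eq_bigr (fun i => dotp H (gam i) * (i == k)%:R)) ?sum_delta ?subrr //.
by move=> i _; rewrite dotpZl om_gam.
Qed.

Lemma Mmat (x : 'I_m.+1 -> R) :
  (forall k, 0 <= dotp (\sum_l x l *: gam l) (gam k)) -> forall k, 0 <= x k.
Proof.
move=> Hx.
pose n k := if x k < 0 then - x k else 0.
pose p k := if x k < 0 then 0 else x k.
have xnp k : x k = p k - n k.
  by rewrite /p /n; case: ifP => _; rewrite ?sub0r ?opprK ?subr0.
have n0 k : 0 <= n k.
  by rewrite /n; case: ifP => // /ltW; rewrite oppr_ge0.
have p0 k : 0 <= p k.
  by rewrite /p; case: ifP => // /negbT; rewrite -leNgt.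
have np k : n k * p k = 0.
  by rewrite /n /p; case: ifP; rewrite ?mulr0 ?mul0r.
pose vn := \sum_l n l *: gam l.
have key : dotp vn vn <= 0.
  rewrite {1}/vn dotp_suml; apply: sumr_le0 => k _; rewrite dotpZl dotpC.
  have E : dotp vn (gam k) = \sum_l p l * dotp (gam l) (gam k)
                             - dotp (\sum_l x l *: gam l) (gam k).
    rewrite /vn !dotp_suml -sumrB; apply: eq_bigr => l _.
    by rewrite !dotpZl xnp; ring.
  rewrite E mulrBr subr_le0; apply: (@le_trans _ _ 0); last first.
    by rewrite mulr_ge0.
  rewrite mulr_sumr; apply: sumr_le0 => l _; rewrite mulrA.
  have [->|lk] := eqVneq l k; first by rewrite np mul0r.
  by rewrite mulr_ge0_le0 ?mulr_ge0 // (gam_obtuse HPsi Hbase lk).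
have vn0 : vn = 0 by apply: dotpp_eq0; apply/le_anti; rewrite key dotpp_ge0.
case: Hbase => _ Hind _.
move=> k; rewrite xnp (Hind n vn0 k) subr0; exact: p0.
Qed.

Lemma Ginv_ge0 i j : 0 <= Ginv i j.
Proof.
apply: (Mmat (x := Ginv i)) => k.
by rewrite -/(om i) om_gam ler0n.
Qed.

Lemma om_dot i j : dotp (om i) (om j) = Ginv j i.
Proof.
rewrite {2}/om dotp_sumr.
rewrite (eq_bigr (fun k => Ginv j k * (k == i)%:R)) ?sum_delta //.
by move=> k _; rewrite dotpZr om_gam eq_sym.
Qed.

Lemma om0_perp u : u \in <<subroots Psi gam>>%VS -> dotp (om ord0) u = 0.
Proof.
apply: span_orth => b /(mem_Psi1) [_ [c [c0 ->]]].
rewrite dotp_sumr (eq_bigr (fun i => (c i)%:~R * (i == ord0)%:R)) ?sum_delta ?c0 //.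
by move=> i _; rewrite dotpZr om_gam eq_sym.
Qed.

End Dual.

Theorem lemma1 (R : realType) (d m : nat) (Psi : seq 'rV[R]_d)
    (gam : 'I_m.+1 -> 'rV[R]_d)
    (HPsi : root_system Psi) (Hbase : base_of Psi gam) :
  let Psi1 := subroots Psi gam in
  let P := avgP Psi1 in
  let spanPsi := fun H : 'rV[R]_d => H \in <<Psi>>%VS in
  let spanPsi1 := fun H : 'rV[R]_d => H \in <<Psi1>>%VS in
  let perpPsi1 := fun H : 'rV[R]_d =>
        spanPsi H /\ forall u, spanPsi1 u -> dotp H u = 0 in
  let splus := fun H : 'rV[R]_d => spanPsi H /\ forall i, 0 < dotp H (gam i) in
  let cplus := fun H : 'rV[R]_d =>
        spanPsi1 H /\ forall i : 'I_m.+1, i != ord0 -> 0 < dotp H (gam i) in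
  let R1 := fun H : 'rV[R]_d =>
        [/\ splus H, 1 <= vnorm H & forall j, dotp (gam j) H <= dotp (gam ord0) H] in
  [/\ (* (i) *)
      (forall sigma H, in_weyl Psi1 sigma -> spanPsi H -> P H *m sigma = P H),
      (* (ii) *)
      orth_proj spanPsi perpPsi1 P /\ orth_proj spanPsi spanPsi1 (fun H => H - P H),
      (* (iii) *)
      (forall H, splus H -> cplus (H - P H))
    & (* (iv) *)
      exists a b : R, [/\ 0 < a, 0 < b &
        forall H, R1 H -> a * vnorm H <= vnorm (P H) /\
                          vnorm (H - P H) <= b * vnorm (P H)]].
Proof.
move=> Psi1 P spanPsi spanPsi1 perpPsi1 splus cplus R1.
have HS0 : forall a, a \in Psi1 -> a != 0 by move=> a; exact: (@Psi1_nz R d m Psi gam HPsi).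
have HScl : forall a b, a \in Psi1 -> b \in Psi1 -> refl a b \in Psi1.
  by move=> a b; exact: (@Psi1_refl R d m Psi gam HPsi).
have Pspan : forall H, H - P H \in <<Psi1>>%VS by move=> H; exact: avgP_span.
have Pperp : forall H u, u \in <<Psi1>>%VS -> dotp (P H) u = 0.
  by move=> H u; exact: avgP_perp.
have sub1 : forall u, u \in <<Psi1>>%VS -> u \in <<Psi>>%VS.
  by move=> u; apply/subvP; apply: sub_span; exact: Psi1_sub.
have HPH : forall H, H - (H - P H) = P H by move=> H; rewrite opprB addrC subrK.
have PinPsi : forall H, spanPsi H -> spanPsi (P H).
  by move=> H HH; rewrite /spanPsi -HPH memvB // sub1.
split.
- by move=> sigma H Hs _; exact: avgP_weyl.
- split.
    move=> H HH; split; first by split; [exact: PinPsi | move=> u; exact: Pperp].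
    by move=> w [_ Hw]; rewrite dotpC; apply: Hw; exact: Pspan.
  move=> H HH; split; first exact: Pspan.
  by move=> w Hw; rewrite HPH; exact: Pperp.
- move=> H [HH Hpos]; split; first exact: Pspan.
  move=> i i0; rewrite dotpBl Pperp ?subr0 ?Hpos // memv_span //.
  exact: gam_Psi1.
pose o := om gam.
have odot : forall i j, 0 <= dotp (o i) (o j).
  by move=> i j; rewrite /o (om_dot Hbase) (Ginv_ge0 HPsi Hbase).
set w00 := dotp (o ord0) (o ord0).
set T := \sum_i \sum_j dotp (o i) (o j).
have w00p : 0 < w00.
  apply: dotpp_gt0; apply/eqP => E.
  by have := om_gam Hbase ord0 ord0; rewrite -/o E dotp0l eqxx => /eqP; rewrite eq_sym oner_eq0.
have Tge : w00 <= T.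
  rewrite /T (bigD1 ord0) //= (bigD1 ord0) //= -addrA lerDl.
  by apply: addr_ge0; apply: sumr_ge0 => i _; [|apply: sumr_ge0 => j _]; exact: odot.
have Tp : 0 < T by apply: lt_le_trans Tge.
exists (Num.sqrt (w00 / T)), (Num.sqrt (T / w00)); split.
- by rewrite sqrtr_gt0 divr_gt0.
- by rewrite sqrtr_gt0 divr_gt0.
move=> H [[HH Hpos] _ Hmax].
pose c i := dotp H (gam i).
have cp : forall i, 0 < c i by move=> i; exact: Hpos.
have cle : forall i, c i <= c ord0 by move=> i; rewrite /c dotpC (dotpC H); exact: Hmax.
have E := H_decomp Hbase HH; rewrite -/o in E.
have HHe : dotp H H <= c ord0 ^+ 2 * T.
  have -> : dotp H H = \sum_i \sum_j c i * c j * dotp (o i) (o j).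
    rewrite {1 2}E dotp_suml; apply: eq_bigr => i _.
    rewrite dotpZl dotp_sumr mulr_sumr; apply: eq_bigr => j _.
    by rewrite dotpZr mulrA.
  rewrite /T mulr_sumr; apply: ler_sum => i _; rewrite mulr_sumr.
  apply: ler_sum => j _; apply: ler_wpM2r; first exact: odot.
  by rewrite expr2 ler_pM // ltW.
have PHo : dotp (P H) (o ord0) = dotp H (o ord0).
  have := om0_perp Hbase (Pspan H).
  by rewrite dotpBr => /eqP; rewrite subr_eq0 => /eqP; rewrite !(dotpC (o ord0)) => ->.
have Hoge : c ord0 * w00 <= dotp H (o ord0).
  rewrite {1}E dotp_suml (bigD1 ord0) //= dotpZl lerDl.
  by apply: sumr_ge0 => i _; rewrite dotpZl mulr_ge0 ?odot // ltW.
have PPge : c ord0 ^+ 2 * w00 <= dotp (P H) (P H).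
  have CSi := CS (P H) (o ord0); rewrite -/w00 PHo in CSi.
  have sq : (c ord0 * w00) ^+ 2 <= dotp H (o ord0) ^+ 2.
    by rewrite !expr2 ler_pM // mulr_ge0 // ltW.
  have := le_trans sq CSi.
  by rewrite exprMn expr2 mulrA ler_pM2r.
have PPge0 := dotpp_ge0 (P H).
have DD : dotp (H - P H) (H - P H) = dotp H H - dotp (P H) (P H).
  have o1 : dotp (P H) (H - P H) = 0 by apply: Pperp.
  rewrite dotpBl o1 subr0 dotpBr.
  have : dotp H (P H) = dotp (P H) (P H).
    by apply/eqP; rewrite -subr_eq0 -dotpBl dotpC o1.
  by move=> ->.
have w00g := ltW w00p; have Tg := ltW Tp.
rewrite /vnorm; split.
  rewrite -sqrtrM ?divr_ge0 //; apply: ler_wsqrtr.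
  apply: (le_trans (ler_wpM2l _ HHe)); first by rewrite divr_ge0 ?ltW.
  have -> : w00 / T * (c ord0 ^+ 2 * T) = c ord0 ^+ 2 * w00.
    by field; rewrite gt_eqF.
  done.
rewrite -sqrtrM ?divr_ge0 //; apply: ler_wsqrtr; rewrite DD.
have -> : T / w00 * dotp (P H) (P H) =
          (c ord0 ^+ 2 * T) + T / w00 * (dotp (P H) (P H) - c ord0 ^+ 2 * w00).
  by field; rewrite gt_eqF.
rewrite -[dotp H H - _]addr0; apply: lerD.
  by rewrite lerBlDr (le_trans HHe) // lerDl.
by rewrite mulr_ge0 ?divr_ge0 // subr_ge0.
Qed.
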